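(* Let $X$ be a separated algebraic variety over $\mathbb{C}$ and let $Z$ and $W$ be finite groups acting on $X$ by morphisms such that the two actions commute: $w(z\cdot x)=z\cdot w(x)$ for all $w\in W$, $z\in Z$, $x\in X$. Let $X^\circ=\{x\in X: W_x=\{1\}\}$, let $Y=X/W$ with the quotient topology of the Zariski topology on $X$, with the induced action of $Z$. Let $z\in Z$ be such that $Y^z=\{y\in Y: z\cdot y=y\}$ is irreducible. If there exist $w_1,w_2\in W$ and $x_1,x_2\in X^\circ$ with $w_i(x_i)=z\cdot x_i$ for $i=1,2$, then $w_1$ is conjugate to $w_2$ in $W$.
   Context: $W_x$ denotes the stabilizer of $x$ in $W$. *)

(* Defs.v *)
From mathcomp Require Import all_boot all_algebra all_fingroup.
From mathcomp Require Import Rstruct complex.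
From mathcomp Require Import mpoly.
Set Implicit Arguments. Unset Strict Implicit. Unset Printing Implicit Defensive.
Import GRing.Theory.
Local Open Scope ring_scope.

Definition C : closedFieldType := complex.complex Rdefinitions.R.

Definition pt (n : nat) := 'I_n -> C.

Definition zero_set n (S : {mpoly C[n]} -> Prop) : pt n -> Prop :=
  fun v => forall p, S p -> p.@[v] = 0.
Definition zclosed n (A : pt n -> Prop) : Prop :=
  exists S : {mpoly C[n]} -> Prop, forall v, A v <-> zero_set S v.
Definition zopen n (O : pt n -> Prop) : Prop :=
  zclosed (fun v => ~ O v).

Definition rel_closed n (V Z : pt n -> Prop) : Prop :=
  exists A, zclosed A /\ forall v, Z v <-> (V v /\ A v).
Definition rel_open n (V O : pt n -> Prop) : Prop :=
  exists A, zopen A /\ forall v, O v <-> (V v /\ A v).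

Definition regular_fun n (O : pt n -> Prop) (f : pt n -> C) : Prop :=
  forall p, O p -> exists (N : pt n -> Prop) (g h : {mpoly C[n]}),
    [/\ zopen N, N p &
     forall q, N q -> O q -> h.@[q] != 0 /\ f q = g.@[q] / h.@[q]].
Definition regular_map n m (O : pt n -> Prop) (t : pt n -> pt m) : Prop :=
  forall k : 'I_m, regular_fun O (fun v => t v k).

Definition pairpt n m (u : pt n) (v : pt m) : pt (n + m) :=
  fun k => match split k with inl a => u a | inr b => v b end.

Definition img (A B : Type) (f : A -> B) (P : A -> Prop) : B -> Prop :=
  fun b => exists a, P a /\ f a = b.

(** A separated algebraic variety over C, given by a finite atlas of affine
    charts: chart i identifies the subset cdom i of the points with the affine
    algebraic set V_i = zero_set (ceqs i) in C^(cdim i); overlaps are open,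
    transition maps are regular, and the variety is separated (the diagonal is
    closed, i.e. the graph of each chart change is closed in V_i x V_j). *)
Unset Implicit Arguments.
Record variety := Variety {
  vpt : Type;
  nch : nat;
  cdim : 'I_nch -> nat;
  cdom : 'I_nch -> vpt -> Prop;
  cmap : forall i, vpt -> pt (cdim i);
  ceqs : forall i, {mpoly C[cdim i]} -> Prop;
  ccover : forall x, exists i, cdom i x;
  cinj : forall i x y, cdom i x -> cdom i y -> cmap i x = cmap i y -> x = y;
  conto : forall i v, zero_set (ceqs i) v <-> img (cmap i) (cdom i) v;
  copen : forall i j, rel_open (zero_set (ceqs i))
            (img (cmap i) (fun x => cdom i x /\ cdom j x));
  ctrans : forall i j, exists t : pt (cdim i) -> pt (cdim j),
    regular_map (img (cmap i) (fun x => cdom i x /\ cdom j x)) t /\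
    forall x, cdom i x -> cdom j x -> t (cmap i x) = cmap j x;
  csep : forall i j,
    rel_closed (fun w : pt (cdim i + cdim j) =>
                  zero_set (ceqs i) (fun a => w (lshift (cdim j) a)) /\
                  zero_set (ceqs j) (fun b => w (rshift (cdim i) b)))
               (img (fun x => pairpt (cmap i x) (cmap j x))
                    (fun x => cdom i x /\ cdom j x))
}.
Set Implicit Arguments.
Arguments cmap {_} i _.
Arguments cdom {_} i _.
Arguments ceqs {_} i _.
Arguments cdim {_} i.

Definition vclosed (X : variety) (Zs : vpt X -> Prop) : Prop :=
  forall i, rel_closed (zero_set (ceqs i)) (img (cmap i) (fun x => cdom i x /\ Zs x)).

Definition vmorphism (X X' : variety) (f : vpt X -> vpt X') : Prop :=
  (forall Zs, vclosed Zs -> vclosed (fun x => Zs (f x))) /\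
  forall i j, exists t : pt (cdim i) -> pt (cdim j),
    regular_map (img (cmap i) (fun x => cdom i x /\ cdom j (f x))) t /\
    forall x, cdom i x -> cdom j (f x) -> t (cmap i x) = cmap j (f x).

Definition action_by_morphisms (G : finGroupType) (X : variety)
    (act : G -> vpt X -> vpt X) : Prop :=
  [/\ forall x, act 1%g x = x,
      forall a b x, act (a * b)%g x = act a (act b x) &
      forall a, vmorphism (act a)].

Definition free_locus (W : finGroupType) (X : variety)
    (actW : W -> vpt X -> vpt X) : vpt X -> Prop :=
  fun x => forall w, actW w x = x -> w = 1%g.

Definition orbit (W : finGroupType) (X : variety)
    (actW : W -> vpt X -> vpt X) (x : vpt X) : vpt X -> Prop :=
  fun y => exists w, y = actW w x.
Definition quot (W : finGroupType) (X : variety) (actW : W -> vpt X -> vpt X) :=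
  {O : vpt X -> Prop | exists x, O = orbit actW x}.
Definition qproj (W : finGroupType) (X : variety) (actW : W -> vpt X -> vpt X)
    (x : vpt X) : quot actW :=
  exist _ (orbit actW x) (ex_intro _ x erefl).

Definition qclosed (W : finGroupType) (X : variety) (actW : W -> vpt X -> vpt X)
    (A : quot actW -> Prop) : Prop :=
  vclosed (fun x => A (qproj actW x)).

Definition qirreducible (W : finGroupType) (X : variety)
    (actW : W -> vpt X -> vpt X) (S : quot actW -> Prop) : Prop :=
  (exists y, S y) /\
  forall A B, qclosed A -> qclosed B -> (forall y, S y -> A y \/ B y) ->
    (forall y, S y -> A y) \/ (forall y, S y -> B y).

Definition qfixed (W Z : finGroupType) (X : variety)
    (actW : W -> vpt X -> vpt X) (actZ : Z -> vpt X -> vpt X) (z : Z) :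
    quot actW -> Prop :=
  fun y => img (actZ z) (sval y) = sval y.

Arguments qfixed {W Z X} actW actZ z _.
Arguments qirreducible {W X} actW S.
Arguments qclosed {W X} actW A.

(* Main.v *)
Require Import Defs.
From mathcomp Require Import all_boot all_algebra all_fingroup.
From mathcomp Require Import mpoly ring.
From Stdlib Require Import Classical FunctionalExtensionality PropExtensionality.
Set Implicit Arguments. Unset Strict Implicit. Unset Printing Implicit Defensive.
Import GRing.Theory.
Local Open Scope ring_scope.

Lemma zclosed_ext n (A B : pt n -> Prop) : zclosed A -> (forall v, A v <-> B v) -> zclosed B.
Proof. move=> [S HS] H; exists S => v; rewrite -H; exact: HS. Qed.

Lemma zclosed_union n (A B : pt n -> Prop) : zclosed A -> zclosed B ->
  zclosed (fun v => A v \/ B v).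
Proof.
move=> [S HS] [T HT].
exists (fun r => exists p q, [/\ S p, T q & r = p * q]) => v; split.
- move=> [/HS HA|/HT HB] r [p [q [Sp Tq ->]]]; rewrite mevalM.
  + by rewrite (HA p Sp) mul0r.
  + by rewrite (HB q Tq) mulr0.
- move=> HZ; apply: NNPP => /not_or_and [nA nB].
  have [p [Sp Hp]] : exists p, S p /\ p.@[v] <> 0.
    apply: NNPP => H; apply: nA; apply/HS => p Sp; apply: NNPP => Hp; apply: H; by exists p.
  have [q [Tq Hq]] : exists q, T q /\ q.@[v] <> 0.
    apply: NNPP => H; apply: nB; apply/HT => q Tq; apply: NNPP => Hq; apply: H; by exists q.
  have := HZ (p * q) (ex_intro _ p (ex_intro _ q (And3 Sp Tq erefl))).
  rewrite mevalM => /eqP; rewrite mulf_eq0 => /orP [/eqP|/eqP] //.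
Qed.

Lemma zclosed_empty n : zclosed (fun _ : pt n => False).
Proof.
exists (fun p => p = 1) => v; split => // H.
by have := H 1 erefl; rewrite meval1 => /eqP; rewrite oner_eq0.
Qed.

Lemma zclosed_neg n (A : pt n -> Prop) : zclosed A -> zopen (fun v => ~ A v).
Proof. move=> HA; rewrite /zopen; apply: (zclosed_ext HA) => v. split; [by move=> a na|exact: NNPP]. Qed.

Lemma zopen_full n : zopen (fun _ : pt n => True).
Proof. rewrite /zopen; apply: (zclosed_ext (@zclosed_empty n)) => v; tauto. Qed.

Lemma zopen_inter n (A B : pt n -> Prop) : zopen A -> zopen B -> zopen (fun v => A v /\ B v).
Proof. move=> HA HB; rewrite /zopen; apply: (zclosed_ext (zclosed_union HA HB)) => v; tauto. Qed.

Lemma zopen_nz n (g : {mpoly C[n]}) : zopen (fun v => g.@[v] != 0).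
Proof.
rewrite /zopen; apply: (zclosed_ext (_ : zclosed (fun v => g.@[v] = 0))).
  exists (fun p => p = g) => v; split; [by move=> H p ->|by move=> H; apply: H].
move=> v; split => [->|H]; first by rewrite eqxx.
by move: H; case: eqP.
Qed.

Lemma regular_const n (O : pt n -> Prop) c : regular_fun O (fun _ => c).
Proof.
move=> p _; exists (fun _ => True), c%:MP, 1; split => //; first exact: zopen_full.
by move=> q _ _; rewrite mevalC meval1 oner_eq0 divr1.
Qed.

Lemma regular_sub n (O O' : pt n -> Prop) f : regular_fun O f -> (forall v, O' v -> O v) ->
  regular_fun O' f.
Proof.
move=> Hf H p /H /Hf [N [g [h [HN Np Hq]]]]; exists N, g, h; split => // q Nq /H; exact: Hq.
Qed.

Lemma regular_ext n (O : pt n -> Prop) f f' : regular_fun O f -> (forall v, O v -> f v = f' v) ->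
  regular_fun O f'.
Proof.
move=> Hf H p Op; have [N [g [h [HN Np Hq]]]] := Hf p Op; exists N, g, h; split => // q Nq Oq.
by rewrite -H //; exact: Hq.
Qed.

Lemma regular_add n (O : pt n -> Prop) f1 f2 : regular_fun O f1 -> regular_fun O f2 ->
  regular_fun O (fun v => f1 v + f2 v).
Proof.
move=> H1 H2 p Op.
have [N1 [g1 [h1 [HN1 Np1 Hq1]]]] := H1 p Op.
have [N2 [g2 [h2 [HN2 Np2 Hq2]]]] := H2 p Op.
exists (fun v => N1 v /\ N2 v), (g1 * h2 + g2 * h1), (h1 * h2); split => //.
  exact: zopen_inter.
move=> q [Nq1 Nq2] Oq; have [nz1 e1] := Hq1 q Nq1 Oq; have [nz2 e2] := Hq2 q Nq2 Oq.
rewrite !mevalM mevalD !mevalM mulf_neq0 //; split => //.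
rewrite e1 e2; field; by apply/andP.
Qed.

Lemma regular_mul n (O : pt n -> Prop) f1 f2 : regular_fun O f1 -> regular_fun O f2 ->
  regular_fun O (fun v => f1 v * f2 v).
Proof.
move=> H1 H2 p Op.
have [N1 [g1 [h1 [HN1 Np1 Hq1]]]] := H1 p Op.
have [N2 [g2 [h2 [HN2 Np2 Hq2]]]] := H2 p Op.
exists (fun v => N1 v /\ N2 v), (g1 * g2), (h1 * h2); split => //.
  exact: zopen_inter.
move=> q [Nq1 Nq2] Oq; have [nz1 e1] := Hq1 q Nq1 Oq; have [nz2 e2] := Hq2 q Nq2 Oq.
rewrite !mevalM mulf_neq0 //; split => //.
rewrite e1 e2; field; by apply/andP.
Qed.

Lemma regular_bigprod n (O : pt n -> Prop) (I : Type) (r : seq I) (F : I -> pt n -> C) :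
  (forall i, regular_fun O (F i)) -> regular_fun O (fun v => \prod_(i <- r) F i v).
Proof.
move=> HF; elim: r => [|a r IH].
  by apply: (regular_ext (regular_const 1)) => v _; rewrite big_nil.
by apply: (regular_ext (regular_mul (HF a) IH)) => v _; rewrite big_cons.
Qed.

Lemma regular_bigsum n (O : pt n -> Prop) (I : Type) (r : seq I) (F : I -> pt n -> C) :
  (forall i, regular_fun O (F i)) -> regular_fun O (fun v => \sum_(i <- r) F i v).
Proof.
move=> HF; elim: r => [|a r IH].
  by apply: (regular_ext (regular_const 0)) => v _; rewrite big_nil.
by apply: (regular_ext (regular_add (HF a) IH)) => v _; rewrite big_cons.
Qed.

Lemma regular_exp n (O : pt n -> Prop) f k : regular_fun O f -> regular_fun O (fun v => f v ^+ k).
Proof.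
move=> Hf; elim: k => [|k IH].
  by apply: (regular_ext (regular_const 1)) => v _; rewrite expr0.
by apply: (regular_ext (regular_mul Hf IH)) => v _; rewrite exprS.
Qed.

Lemma regular_meval n m (O : pt n -> Prop) (u : pt n -> pt m) (s : {mpoly C[m]}) :
  (forall k, regular_fun O (fun v => u v k)) -> regular_fun O (fun v => s.@[u v]).
Proof.
move=> Hu; apply: (regular_ext (f := fun v => \sum_(mm <- msupp s) (s@_mm * \prod_i u v i ^+ mm i))).
  apply: regular_bigsum => mm; apply: regular_mul; first exact: regular_const.
  apply: regular_bigprod => i; exact: regular_exp.
by move=> v _; rewrite mevalE.
Qed.

Lemma regular_nz n (O : pt n -> Prop) F p : regular_fun O F -> O p -> F p != 0 ->
  exists N, [/\ zopen N, N p & forall q, N q -> O q -> F q != 0].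
Proof.
move=> HF Op Fp; have [N [g [h [HN Np Hq]]]] := HF p Op.
have [hp ep] := Hq p Np Op.
have gp : g.@[p] != 0 by apply: contraNneq Fp; rewrite ep => ->; rewrite mul0r.
exists (fun v => N v /\ g.@[v] != 0); split => //; first exact: zopen_inter (zopen_nz g).
move=> q [Nq gq] Oq; have [hq eq] := Hq q Nq Oq; rewrite eq mulf_neq0 //; by rewrite invr_eq0.
Qed.

Lemma pairpt_l n m (u : pt n) (v : pt m) a : pairpt u v (lshift m a) = u a.
Proof. by rewrite /pairpt (unsplitK (inl a : 'I_n + 'I_m)). Qed.
Lemma pairpt_r n m (u : pt n) (v : pt m) b : pairpt u v (rshift n b) = v b.
Proof. by rewrite /pairpt (unsplitK (inr b : 'I_n + 'I_m)). Qed.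

Arguments conto {_} i v.
Arguments cinj {_} i x y.
Arguments copen {_} i j.
Arguments csep {_} i j.
Arguments ccover {_} x.

Section Var.
Variable X : variety.

Lemma vclosed_ext (A B : vpt X -> Prop) : vclosed A -> (forall x, A x <-> B x) -> vclosed B.
Proof.
move=> HA H i; have [Z [HZ HZe]] := HA i; exists Z; split => // v; rewrite -HZe.
split => -[x [[d Ax] e]]; exists x; split => //; split => //; by apply/H.
Qed.

Lemma vclosed_union (A B : vpt X -> Prop) : vclosed A -> vclosed B -> vclosed (fun x => A x \/ B x).
Proof.
move=> HA HB i; have [Z1 [HZ1 e1]] := HA i; have [Z2 [HZ2 e2]] := HB i.
exists (fun v => Z1 v \/ Z2 v); split; first exact: zclosed_union.
move=> v; split.
- move=> [x [[d [Ax|Bx]] <-]].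
  + have [] := (e1 (cmap i x)).1 (ex_intro _ x (conj (conj d Ax) erefl)); tauto.
  + have [] := (e2 (cmap i x)).1 (ex_intro _ x (conj (conj d Bx) erefl)); tauto.
- move=> [V [Z1v|Z2v]].
  + have [x [[d Ax] ex]] := (e1 v).2 (conj V Z1v); exists x; tauto.
  + have [x [[d Bx] ex]] := (e2 v).2 (conj V Z2v); exists x; tauto.
Qed.

Lemma vclosed_empty : vclosed (fun _ : vpt X => False).
Proof.
move=> i; exists (fun _ => False); split; first exact: zclosed_empty.
by move=> v; split => [[x [[_ []] _]]|[]].
Qed.

Lemma vclosed_local (E : vpt X -> Prop) :
  (forall i x0, cdom i x0 -> ~ E x0 -> exists N, [/\ zopen N, N (cmap i x0) &
       forall x, cdom i x -> N (cmap i x) -> ~ E x]) -> vclosed E.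
Proof.
move=> H i.
pose good (N : pt (cdim i) -> Prop) := zopen N /\ forall x, cdom i x -> N (cmap i x) -> ~ E x.
exists (fun v => forall N, good N -> ~ N v); split.
  exists (fun p => exists N S, [/\ good N, (forall v, ~ N v <-> zero_set S v) & S p]) => v.
  split.
  - move=> Hv p [N [S [gN eS Sp]]]; exact: ((eS v).1 (Hv N gN)).
  - move=> Hz N gN; have [S eS] := gN.1; apply/eS => p Sp; apply: Hz; by exists N, S.
move=> v; split.
- move=> [x [[d Ex] <-]]; split; first by apply/conto; exists x.
  by move=> N [_ HN] Nv; exact: HN x d Nv Ex.
- move=> [/conto [x [d ex]] Hv]; exists x; split => //; split => //.
  apply: NNPP => nE; have [N [zN Nx HN]] := H i x d nE.
  by apply: (Hv N); [split|rewrite -ex].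
Qed.

Lemma dom_compl_closed j : vclosed (fun x : vpt X => ~ cdom j x).
Proof.
move=> l; have [A [zA eA]] := copen l j.
exists (fun v => ~ A v); split.
  by apply: (zclosed_ext zA) => v; split; [move=> a na|exact: NNPP].
move=> v; split.
- move=> [x [[dl ndj] <-]]; split; first by apply/conto; exists x.
  move=> Av; have [V _] : zero_set (ceqs l) (cmap l x) /\ True.
    by split => //; apply/conto; exists x.
  have [y [[dly djy] ey]] := (eA (cmap l x)).2 (conj V Av).
  by apply: ndj; rewrite -(cinj _ _ _ dly dl ey).
- move=> [/conto [x [d ex]] nA]; exists x; split => //; split => // dj.
  apply: nA; have := (eA v).1; rewrite -ex; move=> h; apply: (h _).2.
  by exists x.
Qed.

Lemma morph_open (f : vpt X -> vpt X) i j x0 : vmorphism f -> cdom i x0 -> cdom j (f x0) ->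
  exists N, [/\ zopen N, N (cmap i x0) & forall x, cdom i x -> N (cmap i x) -> cdom j (f x)].
Proof.
move=> [fc _] di dj.
have := fc _ (dom_compl_closed j) i => -[A [zA eA]].
exists (fun v => ~ A v); split; first exact: zclosed_neg.
- move=> Ax0.
  have [y [[diy ny] ey]] := (eA (cmap i x0)).2 (conj (proj2 (conto i (cmap i x0)) (ex_intro _ x0 (conj di erefl))) Ax0).
  by apply: ny; rewrite (cinj _ _ _ diy di ey).
- move=> x dx nA; apply: NNPP => ndj; apply: nA.
  by apply: ((eA (cmap i x)).1 (ex_intro _ x (conj (conj dx ndj) erefl))).2.
Qed.

Lemma equalizer_closed (f g : vpt X -> vpt X) : vmorphism f -> vmorphism g ->
  vclosed (fun x => f x = g x).
Proof.
move=> hf hg; apply: vclosed_local => i x0 di neq.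
have [j dj] := ccover (f x0). have [k dk] := ccover (g x0).
have [A [zA eA]] := csep j k.
have [S eS] := zA.
pose w0 := pairpt (cmap j (f x0)) (cmap k (g x0)).
have nimg : ~ img (fun x => pairpt (cmap j x) (cmap k x)) (fun x => cdom j x /\ cdom k x) w0.
  move=> [y [[djy dky] ey]]; apply: neq.
  have e1 : cmap j y = cmap j (f x0).
    apply: functional_extensionality => a.
    by move/(congr1 (fun w => w (lshift _ a))): ey; rewrite /= /w0 !pairpt_l.
  have e2 : cmap k y = cmap k (g x0).
    apply: functional_extensionality => b.
    by move/(congr1 (fun w => w (rshift _ b))): ey; rewrite /= /w0 !pairpt_r.
  by rewrite -(cinj _ _ _ djy dj e1) (cinj _ _ _ dky dk e2).
have V0 : zero_set (ceqs j) (fun a => w0 (lshift (cdim k) a)) /\ zero_set (ceqs k) (fun b => w0 (rshift (cdim j) b)).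
  split.
  - have -> : (fun a => w0 (lshift (cdim k) a)) = cmap j (f x0).
      by apply: functional_extensionality => a; rewrite /w0 pairpt_l.
    by apply/conto; exists (f x0).
  - have -> : (fun b => w0 (rshift (cdim j) b)) = cmap k (g x0).
      by apply: functional_extensionality => b; rewrite /w0 pairpt_r.
    by apply/conto; exists (g x0).
have nA : ~ A w0 := fun Aw => nimg ((eA w0).2 (conj V0 Aw)).
have [s [Ss sw0]] : exists s, S s /\ s.@[w0] != 0.
  apply: NNPP => H; apply: nA; apply/eS => s Ss; apply: NNPP => hs; apply: H.
  by exists s; split => //; apply/eqP.
have [tf [rf ef]] := hf.2 i j. have [tg [rg eg]] := hg.2 i k.
pose O := img (cmap i) (fun x => cdom i x /\ cdom j (f x) /\ cdom k (g x)).
have rF : regular_fun O (fun v => s.@[pairpt (tf v) (tg v)]).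
  apply: regular_meval => l; rewrite /pairpt; case: (split l) => [a|b].
  - apply: (regular_sub (rf a)) => v [x [[d [d1 d2]] <-]]; exists x; tauto.
  - apply: (regular_sub (rg b)) => v [x [[d [d1 d2]] <-]]; exists x; tauto.
have O0 : O (cmap i x0) by exists x0.
have F0 : s.@[pairpt (tf (cmap i x0)) (tg (cmap i x0))] != 0 by rewrite ef // eg.
have [N1 [zN1 N1x HN1]] := regular_nz rF O0 F0.
have [N2 [zN2 N2x HN2]] := morph_open hf di dj.
have [N3 [zN3 N3x HN3]] := morph_open hg di dk.
exists (fun v => N1 v /\ N2 v /\ N3 v); split => //.
- apply: zopen_inter => //; exact: zopen_inter.
- move=> x dx [n1 [n2 n3]] e.
  have fj := HN2 x dx n2; have gk := HN3 x dx n3.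
  have := HN1 _ n1 (ex_intro _ x (conj (conj dx (conj fj gk)) erefl)).
  rewrite ef // eg //.
  have : A (pairpt (cmap j (f x)) (cmap k (g x))).
    apply: ((eA _).1 _).2; exists (f x); split; last by rewrite e.
    by split => //; rewrite e.
  by move/eS => H; rewrite (H s Ss) eqxx.
Qed.
End Var.

Lemma eqlist_closed (X : variety) (W Z : finGroupType)
    (actW : W -> vpt X -> vpt X) (actZ : Z -> vpt X -> vpt X)
    (hW : forall w, vmorphism (actW w)) (z : Z) (hZ : vmorphism (actZ z))
    (Q : W -> Prop) (s : seq W) :
  vclosed (fun x => exists w, w \in s /\ Q w /\ actW w x = actZ z x).
Proof.
elim: s => [|a s IH].
  by apply: (vclosed_ext (@vclosed_empty X)) => x; split => // -[w [] ].
have Ha : vclosed (fun x => Q a /\ actW a x = actZ z x).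
  case: (classic (Q a)) => Qa.
    by apply: (vclosed_ext (equalizer_closed (hW a) hZ)) => x; tauto.
  by apply: (vclosed_ext (@vclosed_empty X)) => x; tauto.
apply: (vclosed_ext (vclosed_union Ha IH)) => x; split.
- move=> [[Qa e]|[w [ws Hw]]].
    by exists a; rewrite mem_head.
  by exists w; rewrite in_cons ws orbT.
- move=> [w [ws [Qw e]]]; move: ws; rewrite in_cons => /orP [/eqP Ew|ws].
    by left; rewrite -Ew.
  by right; exists w.
Qed.

Theorem theorem4p1 (X : variety) (W Z : finGroupType)
    (actW : W -> vpt X -> vpt X) (actZ : Z -> vpt X -> vpt X)
    (hW : action_by_morphisms actW) (hZ : action_by_morphisms actZ)
    (hcomm : forall (w : W) (z : Z) (x : vpt X),
        actW w (actZ z x) = actZ z (actW w x))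
    (z : Z) (hirr : qirreducible actW (qfixed actW actZ z))
    (w1 w2 : W) (x1 x2 : vpt X)
    (hx1 : free_locus actW x1) (hx2 : free_locus actW x2)
    (h1 : actW w1 x1 = actZ z x1) (h2 : actW w2 x2 = actZ z x2) :
  exists u : W, w2 = (w1 ^ u)%g.
Proof.
have [h1W hMW hmW] := hW; have [_ _ hmZ] := hZ.
have canc : forall a b x, free_locus actW x -> actW a x = actW b x -> a = b.
  move=> a b x fx e.
  have : actW (b^-1 * a)%g x = x by rewrite hMW e -hMW mulVg h1W.
  by move/fx => H; rewrite -(mulKVg b a) H mulg1.
have conjact : forall w v x, actW w (actW v x) = actZ z (actW v x) ->
    actW (w ^ v)%g x = actZ z x.
  move=> w v x e; rewrite conjgE !hMW e -hcomm -hMW mulVg h1W //.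
pose EQ (Q : W -> Prop) x := exists w, Q w /\ actW w x = actZ z x.
have EQc : forall Q, vclosed (EQ Q).
  move=> Q; apply: (vclosed_ext (eqlist_closed hmW (hmZ z) Q (enum W))) => x.
  split => [[w [_ H]]|[w H]]; exists w => //; by rewrite mem_enum.
have orbE : forall Q x, (forall w v, Q w -> Q (w ^ v)%g) ->
    ((exists x', Defs.orbit actW x x' /\ EQ Q x') <-> EQ Q x).
  move=> Q x Qi; split.
  - move=> [x' [[v ->] [w [Qw e]]]]; exists (w ^ v)%g; split; first exact: Qi.
    exact: conjact.
  - move=> H; exists x; split => //; exists 1%g; by rewrite h1W.
pose P w := exists u, w = (w1 ^ u)%g.
have Pi : forall w v, P w -> P (w ^ v)%g.
  by move=> w v [u ->]; exists (u * v)%g; rewrite conjgM.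
have nPi : forall w v, ~ P w -> ~ P (w ^ v)%g.
  move=> w v nP [u e]; apply: nP; exists (u * v^-1)%g.
  by rewrite conjgM -e conjgK.
pose A (y : quot actW) := exists x, sval y x /\ EQ P x.
pose B (y : quot actW) := exists x, sval y x /\ EQ (fun w => ~ P w) x.
have qA : qclosed actW A.
  by apply: (vclosed_ext (EQc P)) => x; rewrite /A /= orbE.
have qB : qclosed actW B.
  by apply: (vclosed_ext (EQc (fun w => ~ P w))) => x; rewrite /B /= orbE.
have cover : forall y, qfixed actW actZ z y -> A y \/ B y.
  move=> [O [x eO]]; rewrite /qfixed /= => H.
  have : O (actZ z x).
    rewrite -H; exists x; split => //; rewrite eO; exists 1%g; by rewrite h1W.
  move=> Oz; have [w ew] : Defs.orbit actW x (actZ z x) by rewrite -eO.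
  have Ox : O x by rewrite eO; exists 1%g; rewrite h1W.
  case: (classic (P w)) => Pw; [left|right]; exists x; split => //; exists w; by split.
have fixq : forall x w, actW w x = actZ z x -> qfixed actW actZ z (qproj actW x).
  move=> x w h; rewrite /qfixed /=; apply: functional_extensionality => y.
  apply: propositional_extensionality; split.
  - move=> [x' [[v ->] <-]]; exists (v * w)%g; by rewrite -hcomm -h hMW.
  - move=> [v ->]; exists (actW (v * w^-1)%g x); split; first by exists (v * w^-1)%g.
    by rewrite -hcomm -h -hMW mulgVK.
have [allA|allB] := hirr.2 A B qA qB cover.
- have := allA _ (fixq _ _ h2); rewrite /A /= (orbE _ _ Pi).
  move=> [w [[u ->] e]]; exists u; apply: (canc _ _ x2 hx2); by rewrite h2 e.
- have := allB _ (fixq _ _ h1); rewrite /B /= (orbE _ _ nPi).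
  move=> [w [nP e]]; exfalso; apply: nP; exists 1%g; rewrite conjg1.
  by apply: (canc _ _ x1 hx1); rewrite e h1.
Qed.
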